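(* Let $(G,\prec)$ be a POP-graph and let $v$ be an internal vertex of $G$ that is minimal, i.e. there is no internal vertex $v'\neq v$ with $v'\to v$. Then (1) $I(v)\subseteq I(G)$ and $I(v)$ is an interval of $(E(G),\prec)$; in particular $I(v)$ is an interval of $(I(G),\prec)$. (2) For every $h\in O(v)$ and $i\in I(G)\setminus I(v)$: $i\prec h$ iff $i\prec\min I(v)$, and $h\prec i$ iff $\max I(v)\prec i$.
   Context: A progressive graph is a finite directed acyclic graph (parallel edges allowed) in which every source and every sink has degree one; degree-one vertices are boundary vertices, the others internal. $I(G)$ is the set of input edges (edges whose initial vertex is a boundary vertex). For a vertex $v$, $I(v)$ and $O(v)$ are its incoming and outgoing edges. For edges write $e\to e'$ if $e\neq e'$ and there is a directed path whose first edge is $e$ and last edge is $e'$; for vertices $v'\to v$ means there is a directed path from $v'$ to $v$. A planar order on $G$ is a linear order $\prec$ on $E(G)$ such that (P1) $e_1\to e_2$ implies $e_1\prec e_2$; (P2) if $e_1\prec e_2\prec e_3$ and $e_1\to e_3$ then $e_1\to e_2$ or $e_2\to e_3$. A POP-graph is a progressive graph with a planar order. An interval of a linearly ordered set $(S,\prec)$ is a subset of the form $\{s: a\preceq s\preceq b\}$. *)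

(* Defs.v *)
From mathcomp Require Import all_boot.
Set Implicit Arguments. Unset Strict Implicit. Unset Printing Implicit Defensive.

(* A finite directed graph with parallel edges: vertex type V, edge type E,
   each edge e goes from [src e] to [tgt e]. *)
Section POP.
Variables (V E : finType) (src tgt : E -> V).

Definition In_v (v : V) : {set E} := [set e | tgt e == v].
Definition Out_v (v : V) : {set E} := [set e | src e == v].
Definition deg (v : V) : nat := #|In_v v| + #|Out_v v|.

Definition boundary (v : V) : bool := deg v == 1.
Definition internal (v : V) : bool := ~~ boundary v.

Definition vadj : rel V := fun x y => [exists e, (src e == x) && (tgt e == y)].
Definition eadj : rel E := fun e e' => tgt e == src e'.

Definition vreach (x y : V) : bool := connect vadj x y.
Definition ereach (e e' : E) : bool := (e != e') && connect eadj e e'.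

Definition acyclic : Prop := forall x y, vadj x y -> ~~ connect vadj y x.

Definition progressive : Prop :=
  acyclic /\
  (forall v, In_v v = set0 -> deg v = 1) /\
  (forall v, Out_v v = set0 -> deg v = 1).

Definition input_edges : {set E} := [set e | boundary (src e)].

Definition strict_linear (lt : rel E) : Prop :=
  irreflexive lt /\ transitive lt /\ (forall x y, x != y -> lt x y || lt y x).

Definition leo (lt : rel E) (x y : E) : bool := (x == y) || lt x y.

Definition planar_order (lt : rel E) : Prop :=
  strict_linear lt /\
  (forall e1 e2, ereach e1 e2 -> lt e1 e2) /\
  (forall e1 e2 e3, lt e1 e2 -> lt e2 e3 -> ereach e1 e3 ->
      ereach e1 e2 || ereach e2 e3).

Definition is_interval (lt : rel E) (S A : {set E}) : Prop :=
  exists a b, [/\ a \in S, b \in S &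
    A = [set s in S | leo lt a s && leo lt s b]].

Definition is_min (lt : rel E) (A : {set E}) (a : E) : Prop :=
  a \in A /\ forall x, x \in A -> leo lt a x.
Definition is_max (lt : rel E) (A : {set E}) (b : E) : Prop :=
  b \in A /\ forall x, x \in A -> leo lt x b.

End POP.

(* Main.v *)
Require Import Defs.
From mathcomp Require Import all_boot.
Set Implicit Arguments.
Unset Strict Implicit.

Lemma conn_last (T : finType) (r : rel T) x y :
  connect r x y -> x != y -> exists z, connect r x z && r z y.
Proof.
move=> /connectP [p Hp ->]; case/lastP: p Hp => [|p z] /=.
  by rewrite eqxx.
rewrite rcons_path => /andP [Hp Hz] _; exists (last x p).
by rewrite last_rcons Hz andbT; apply/connectP; exists p.
Qed.

Lemma conn_first (T : finType) (r : rel T) x y :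
  connect r x y -> x != y -> exists z, r x z && connect r z y.
Proof.
move=> /connectP [p Hp ->]; case: p Hp => [|z p] /=.
  by rewrite eqxx.
move=> /andP [Hz Hp] _; exists z; rewrite Hz /=.
by apply/connectP; exists p.
Qed.

Lemma seq_min (E : finType) (lt : rel E) (s : seq E) x0 :
  transitive lt -> (forall x y, x != y -> lt x y || lt y x) ->
  x0 \in s -> exists2 a, a \in s & forall x, x \in s -> leo lt a x.
Proof.
move=> Htr Htot; elim: s x0 => [//|y s IH] x0 _.
case: (boolP (x0 \in s)) => [/IH [a Ha Hm]|_].
  case: (boolP (lt y a)) => Hya.
    exists y; first by rewrite inE eqxx.
    move=> x; rewrite inE => /orP [/eqP ->|Hx]; first by rewrite /leo eqxx.
    move: (Hm x Hx); rewrite /leo => /orP [/eqP <-|Hax]; first by rewrite Hya orbT.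
    by rewrite (Htr _ _ _ Hya Hax) orbT.
  exists a; first by rewrite inE Ha orbT.
  move=> x; rewrite inE => /orP [/eqP ->|Hx]; last exact: Hm.
  rewrite /leo; case: (eqVneq a y) => //= Hay.
  by move: (Htot _ _ Hay); rewrite (negbTE Hya) orbF.
case: (boolP (s == [::])) => [/eqP -> | Hs].
  exists y; first by rewrite inE eqxx.
  by move=> x; rewrite inE => /eqP ->; rewrite /leo eqxx.
case: s IH Hs => [//|z s] IH _.
have [a Ha Hm] := IH z (mem_head z s).
case: (boolP (lt y a)) => Hya.
  exists y; first by rewrite inE eqxx.
  move=> x; rewrite inE => /orP [/eqP ->|Hx]; first by rewrite /leo eqxx.
  move: (Hm x Hx); rewrite /leo => /orP [/eqP <-|Hax]; first by rewrite Hya orbT.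
  by rewrite (Htr _ _ _ Hya Hax) orbT.
exists a; first by rewrite inE Ha orbT.
move=> x; rewrite inE => /orP [/eqP ->|Hx]; last exact: Hm.
rewrite /leo; case: (eqVneq a y) => //= Hay.
by move: (Htot _ _ Hay); rewrite (negbTE Hya) orbF.
Qed.

Lemma set_min (E : finType) (lt : rel E) (A : {set E}) x0 :
  strict_linear lt -> x0 \in A -> exists a, is_min lt A a.
Proof.
move=> [_ [Htr Htot]] Hx0.
have Hx0e : x0 \in enum A by rewrite mem_enum.
have [a Ha Hm] := @seq_min _ lt (enum A) x0 Htr Htot Hx0e.
exists a; split; first by rewrite -mem_enum.
by move=> x Hx; apply: Hm; rewrite mem_enum.
Qed.

Lemma set_max (E : finType) (lt : rel E) (A : {set E}) x0 :
  strict_linear lt -> x0 \in A -> exists b, is_max lt A b.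
Proof.
move=> [Hirr [Htr Htot]] Hx0.
have Hsl : strict_linear (fun x y => lt y x).
  split; first by move=> x; apply: Hirr.
  split; first by move=> y x z H1 H2; apply: (Htr _ _ _ H2 H1).
  by move=> x y Hxy; rewrite orbC; apply: Htot.
have [b [Hb Hm]] := @set_min E _ A x0 Hsl Hx0.
exists b; split => // x Hx; move: (Hm x Hx); rewrite /leo eq_sym //.
Qed.

Lemma ereach_src_internal (V E : finType) (src tgt : E -> V) x y :
  ereach src tgt x y -> internal src tgt (src y).
Proof.
move=> /andP [Hne Hc]; have [z /andP [_ Hz]] := conn_last Hc Hne.
rewrite /internal /boundary /deg.
have H1 : 0 < #|In_v tgt (src y)| by apply/card_gt0P; exists z; rewrite inE.
have H2 : 0 < #|Out_v src (src y)| by apply/card_gt0P; exists y; rewrite inE.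
move: H1 H2; case: #|In_v tgt (src y)| => [//|n] _.
by case: #|Out_v src (src y)| => [//|m] _; rewrite addSn eqSS addnS.
Qed.

Unset Implicit Arguments. Set Strict Implicit.

Theorem lemma3p5 (V E : finType) (src tgt : E -> V) (lt : rel E)
  (Hprog : progressive src tgt) (Hplan : planar_order src tgt lt)
  (v : V) (Hv : internal src tgt v)
  (Hmin : forall v', internal src tgt v' -> v' != v -> ~~ vreach src tgt v' v) :
  (In_v tgt v \subset input_edges src tgt /\
   is_interval lt [set: E] (In_v tgt v) /\
   is_interval lt (input_edges src tgt) (In_v tgt v)) /\
  (forall a b, is_min lt (In_v tgt v) a -> is_max lt (In_v tgt v) b ->
   forall h i, h \in Out_v src v ->
     i \in input_edges src tgt :\: In_v tgt v ->
     (lt i h <-> lt i a) /\ (lt h i <-> lt b i)).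
Proof.
have Hplan' := Hplan.
move: Hplan => [[Hirr [Htr Htot]] [HP1 HP2]].
move: Hprog => [Hacyc [Hsrc Hsnk]].
have [c0 Hc0] : exists c, c \in In_v tgt v.
  case: (set_0Vmem (In_v tgt v)) => [H|[c Hc]]; last by exists c.
  by move: Hv; rewrite /internal /boundary Hsrc.
have hex : exists h, h \in Out_v src v.
  case: (set_0Vmem (Out_v src v)) => [H|[c Hc]]; last by exists c.
  by move: Hv; rewrite /internal /boundary Hsnk.
have Hin : forall c, c \in In_v tgt v -> boundary src tgt (src c).
  move=> c Hc; apply/negPn/negP => Hint.
  have Hcv : vadj src tgt (src c) v.
    by apply/existsP; exists c; rewrite inE in Hc; rewrite eqxx Hc.
  have Hne : src c != v.
    apply/eqP => Heq; have := Hacyc _ _ Hcv; rewrite Heq connect0 //.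
  have := Hmin _ Hint Hne; rewrite /vreach (connect1 Hcv) //.
have Hnr : forall x c, c \in In_v tgt v -> ~~ ereach src tgt x c.
  move=> x c Hc; apply/negP => /ereach_src_internal; rewrite /internal (Hin c Hc) //.
have Hni : forall x i, i \in input_edges src tgt -> ~~ ereach src tgt x i.
  move=> x i; rewrite inE => Hi; apply/negP => /ereach_src_internal.
  by rewrite /internal Hi.
have Hah : forall c h, c \in In_v tgt v -> h \in Out_v src v -> ereach src tgt c h.
  move=> c h; rewrite !inE => /eqP Hc /eqP Hh.
  rewrite /ereach; apply/andP; split; last by apply: connect1; rewrite /eadj Hc Hh.
  apply/eqP => Eq; subst h.
  have : vadj src tgt v v by apply/existsP; exists c; rewrite Hc Hh eqxx.
  by move/Hacyc; rewrite connect0.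
have Hlast : forall x h, h \in Out_v src v -> ereach src tgt x h -> x \in In_v tgt v.
  move=> x h Hh /andP [Hne Hc]; have [z /andP [Hxz Hzh]] := conn_last Hc Hne.
  have Hz : z \in In_v tgt v.
    by move: Hh Hzh; rewrite !inE /eadj => /eqP <-.
  case: (eqVneq x z) => [->//|Hxz'].
  have : ereach src tgt x z by rewrite /ereach Hxz' Hxz.
  by rewrite (negbTE (Hnr x z Hz)).
have Hshift : forall c c' x, c \in In_v tgt v -> c' \in In_v tgt v ->
    ereach src tgt c x -> c' != x -> ereach src tgt c' x.
  move=> c c' x; rewrite !inE => /eqP Hc /eqP Hc' /andP [Hne Hcx] Hne'.
  have [z /andP [Hcz Hzx]] := conn_first Hcx Hne.
  rewrite /ereach Hne' /=; apply: (connect_trans (connect1 _) Hzx).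
  by rewrite /eadj Hc'; rewrite /eadj Hc in Hcz.
have Hasym : forall x y, lt x y -> lt y x -> False.
  by move=> x y H1 H2; have := Htr _ _ _ H1 H2; rewrite Hirr.
have Htot' : forall x y, x != y -> ~~ lt x y -> lt y x.
  by move=> x y /Htot /orP [->//|//].
have Hint : forall a b, is_min lt (In_v tgt v) a -> is_max lt (In_v tgt v) b ->
    forall e, leo lt a e -> leo lt e b -> e \in In_v tgt v.
  move=> a b [Ha Hma] [Hb Hmb] e; rewrite /leo.
  case/orP => [/eqP <- //|Hae]; case/orP => [/eqP -> //|Heb].
  apply/negPn/negP => Hne.
  have [h Hh] := hex.
  have Hbh := HP1 _ _ (Hah _ _ Hb Hh).
  have Heh := Htr _ _ _ Heb Hbh.
  case/orP: (HP2 _ _ _ Hae Heh (Hah _ _ Ha Hh)) => Hre.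
    have Hbe : ereach src tgt b e.
      apply: (Hshift a) => //; apply/eqP => Eq; by rewrite Eq Hirr in Heb.
    exact: Hasym _ _ Heb (HP1 _ _ Hbe).
  by move: (Hlast _ _ Hh Hre); rewrite (negbTE Hne).
have [a0 Ha0] := set_min Hplan'.1 Hc0.
have [b0 Hb0] := set_max Hplan'.1 Hc0.
have Hsub : In_v tgt v \subset input_edges src tgt.
  by apply/subsetP => c Hc; rewrite inE; exact: Hin.
split.
  split => //; split.
    exists a0, b0; split; [by [] | by [] |].
    apply/setP => e; apply/idP/idP.
      by move=> He; rewrite !inE /= (Ha0.2 e He) (Hb0.2 e He).
    by move=> /setIdP [_ /andP [H1 H2]]; exact: Hint Ha0 Hb0 e H1 H2.
  exists a0, b0; split; [by rewrite inE; apply: Hin; exact: Ha0.1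
                        | by rewrite inE; apply: Hin; exact: Hb0.1 |].
  apply/setP => e; apply/idP/idP.
    move=> He; apply/setIdP; split; first by rewrite inE; exact: Hin.
    by rewrite (Ha0.2 e He) (Hb0.2 e He).
  by move=> /setIdP [_ /andP [H1 H2]]; exact: Hint Ha0 Hb0 e H1 H2.
move=> a b Hamin Hbmax h i Hh; rewrite inE => /andP [HniIn Hiinp].
have Ha := Hamin.1; have Hb := Hbmax.1.
have Hia : i != a by apply/eqP => Eq; rewrite Eq Ha in HniIn.
have Hib : i != b by apply/eqP => Eq; rewrite Eq Hb in HniIn.
have Hih : i != h.
  apply/eqP => Eq; move: Hiinp Hh Hv; rewrite !inE /internal => Hi /eqP <-.
  by rewrite -Eq Hi.
have Hah' := HP1 _ _ (Hah _ _ Ha Hh).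
have Hcontra : forall c, c \in In_v tgt v -> lt c i -> lt i h -> False.
  move=> c Hc H1 H2; case/orP: (HP2 _ _ _ H1 H2 (Hah _ _ Hc Hh)) => Hr.
    by rewrite (negbTE (Hni _ _ Hiinp)) in Hr.
  by move: (Hlast _ _ Hh Hr); rewrite (negbTE HniIn).
split; split.
- move=> Hih1; apply/negPn/negP => Hn.
  exact: (Hcontra a Ha (Htot' _ _ Hia Hn) Hih1).
- by move=> Hia1; exact: Htr _ _ _ Hia1 Hah'.
- move=> Hhi; apply/negPn/negP => Hn.
  have Hbi : b != i by rewrite eq_sym.
  have Hib' := Htot' _ _ Hbi Hn.
  case: (boolP (lt i a)) => Hia2.
    exact: Hasym _ _ Hhi (Htr _ _ _ Hia2 Hah').
  have Hai := Htot' _ _ Hia Hia2.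
  move: (Hint _ _ Hamin Hbmax i); rewrite /leo Hai Hib' !orbT => /(_ isT isT).
  by rewrite (negbTE HniIn).
- move=> Hbi; apply/negPn/negP => Hn.
  have Hhi : h != i by rewrite eq_sym.
  exact: (Hcontra b Hb Hbi (Htot' _ _ Hhi Hn)).
Qed.
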